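(* Let $\underline\Omega=\{L\in\mathbb R^{m_2\times d}: Q-L^\top R^vL\succ0\}$. In general the problem is nonconvex-nonconcave: there exist problem data and $L\in\underline\Omega$ such that $\min_K\mathcal C(K,L)$ is a nonconvex minimization problem (the set of $K$ for which $(K,L)$ is stabilizing, equivalently $\mathcal C(K,L)<\infty$, is nonconvex), and there exist problem data and $K$ such that $\max_{L\in\underline\Omega}\mathcal C(K,L)$ is a nonconcave maximization problem (the set of $L\in\underline\Omega$ for which $(K,L)$ is stabilizing is nonconvex).
   Context: Zero-sum LQ game: $A\in\mathbb R^{d\times d}$, $B\in\mathbb R^{d\times m_1}$, $C\in\mathbb R^{d\times m_2}$, symmetric positive definite $Q,R^u,R^v$; dynamics $x_{t+1}=Ax_t+Bu_t+Cv_t$, cost $x_t^\top Qx_t+u_t^\top R^uu_t-v_t^\top R^vv_t$, initial state $x_0\sim\mathcal D$ with $\Sigma_0=\mathbb E[x_0x_0^\top]\succ0$. Linear feedback policies $u_t=-Kx_t$, $v_t=-Lx_t$ with $K\in\mathbb R^{m_1\times d}$, $L\in\mathbb R^{m_2\times d}$; $(K,L)$ is stabilizing if $\rho(A-BK-CL)<1$. For such policies $\mathcal C(K,L)=\mathbb E_{x_0\sim\mathcal D}\sum_{t\ge0}[x_t^\top Qx_t+(Kx_t)^\top R^u(Kx_t)-(Lx_t)^\top R^v(Lx_t)]$ (possibly infinite). *)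

(* Defs.v *)
(* Real matrices are represented as matrices over algC
   (algebraic complex numbers, a numClosedFieldType) all of whose entries are
   real; eigenvalues are taken in algC, so the spectral radius is available. *)
From HB Require Import structures.
From mathcomp Require Import all_boot all_order all_algebra all_field all_character.
Set Implicit Arguments. Unset Strict Implicit. Unset Printing Implicit Defensive.
Import Order.TTheory GRing.Theory Num.Theory.
Local Open Scope ring_scope.

Definition spec_rad_lt1 (n : nat) (M : 'M[algC]_n) : Prop :=
  forall a : algC, eigenvalue M a -> `|a| < 1.

Definition posdef (n : nat) (Q : 'M[algC]_n) : Prop :=
  [/\ Q \is a realmx, Q^T = Q &
      forall v : 'cV[algC]_n, v \is a realmx -> v != 0 -> 0 < (v^T *m Q *m v) 0 0].

Definition stabilizing (d m1 m2 : nat) (A : 'M[algC]_d) (B : 'M[algC]_(d, m1))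
  (C : 'M[algC]_(d, m2)) (K : 'M[algC]_(m1, d)) (L : 'M[algC]_(m2, d)) : Prop :=
  spec_rad_lt1 (A - B *m K - C *m L).

Definition OmegaL (d m2 : nat) (Q : 'M[algC]_d) (Rv : 'M[algC]_m2)
  (L : 'M[algC]_(m2, d)) : Prop :=
  L \is a realmx /\ posdef (Q - L^T *m Rv *m L).

Definition real_convex (m n : nat) (S : 'M[algC]_(m, n) -> Prop) : Prop :=
  forall X Y, S X -> S Y -> forall t : algC, t \is Num.real -> 0 <= t <= 1 ->
    S ((1 - t) *: X + t *: Y).

Definition lq_data (d m1 m2 : nat) (A : 'M[algC]_d) (B : 'M[algC]_(d, m1))
  (C : 'M[algC]_(d, m2)) (Q : 'M[algC]_d) (Ru : 'M[algC]_m1) (Rv : 'M[algC]_m2)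
  : Prop :=
  [/\ A \is a realmx, B \is a realmx, C \is a realmx & [/\ posdef Q, posdef Ru & posdef Rv]].

(* Main.v *)
Require Import Defs.
From HB Require Import structures.
From mathcomp Require Import all_boot all_order all_algebra all_field all_character.
From mathcomp Require Import ring.
Import Order.TTheory GRing.Theory Num.Theory.
Local Open Scope ring_scope.

Definition mx2 (a b c e : algC) : 'M[algC]_2 :=
  \matrix_(i < 2, j < 2) if i == 0 then (if j == 0 then a else b)
                         else (if j == 0 then c else e).

Lemma ord2_cases (i : 'I_2) : i = 0 \/ i = 1.
Proof. case: i => [[|[|//]]] Hi; [left|right]; exact: val_inj. Qed.

Ltac mxcase := apply/matrixP;
  do 2 (let x := fresh "x" in intro x; case: (ord2_cases x) => ->);
  rewrite !mxE ?big_ord_recl ?big_ord0 /= ?mxE /=.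

Lemma mx2_mul a b c e a' b' c' e' :
  mx2 a b c e *m mx2 a' b' c' e' =
  mx2 (a*a' + b*c') (a*b' + b*e') (c*a' + e*c') (c*b' + e*e').
Proof. mxcase; rewrite ?addr0 //. Qed.

Lemma mx2_add a b c e a' b' c' e' :
  mx2 a b c e + mx2 a' b' c' e' = mx2 (a+a') (b+b') (c+c') (e+e').
Proof. by mxcase. Qed.

Lemma mx2_scale k a b c e : k *: mx2 a b c e = mx2 (k*a) (k*b) (k*c) (k*e).
Proof. by mxcase. Qed.

Lemma mx2_opp a b c e : - mx2 a b c e = mx2 (-a) (-b) (-c) (-e).
Proof. by mxcase. Qed.

Lemma mx2_tr a b c e : (mx2 a b c e)^T = mx2 a c b e.
Proof. by mxcase. Qed.

Lemma mx2_one : (1%:M : 'M[algC]_2) = mx2 1 0 0 1.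
Proof. by mxcase. Qed.

Lemma mx2_real a b c e : a \is Num.real -> b \is Num.real -> c \is Num.real ->
  e \is Num.real -> mx2 a b c e \is a realmx.
Proof.
move=> ha hb hc he; apply/mxOverP => i j.
by case: (ord2_cases i) => ->; case: (ord2_cases j) => ->; rewrite !mxE.
Qed.

Lemma sqr_pos (x : algC) : x \is Num.real -> x != 0 -> 0 < x ^+ 2.
Proof. by move=> hx nx; rewrite lt_def sqrf_eq0 nx -realEsqr. Qed.

Lemma posdef_diag (a e : algC) : 0 < a -> 0 < e -> posdef (mx2 a 0 0 e).
Proof.
move=> ha he; rewrite /posdef; split.
- by apply/mxOverP => i j; case: (ord2_cases i) => ->; case: (ord2_cases j) => ->; rewrite !mxE /= ?real0 ?(gtr0_real ha) ?(gtr0_real he).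
- by rewrite mx2_tr.
move=> v /mxOverP vr vn.
have -> : (v^T *m mx2 a 0 0 e *m v) 0 0 = a * (v 0 0)^+2 + e * (v 1 0)^+2.
  rewrite !mxE !big_ord_recl !big_ord0 /= !mxE !big_ord_recl !big_ord0 /= !mxE /=.
  have -> : lift ord0 ord0 = 1 :> 'I_2 by apply/val_inj.
  rewrite !expr2; ring.
have h0 := vr 0 0; have h1 := vr 1 0.
have [z0|nz0] := eqVneq (v 0 0) 0.
- have nz1 : v 1 0 != 0.
    apply: contraNneq vn => z1; apply/eqP/matrixP => i j.
    rewrite (ord1 j) mxE; by case: (ord2_cases i) => ->.
  rewrite z0 expr0n /= mulr0 add0r; apply: mulr_gt0 => //; exact: sqr_pos.
- apply: ltr_pwDl; first by apply: mulr_gt0 => //; exact: sqr_pos.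
  by apply: mulr_ge0; [exact: ltW | rewrite -realEsqr].
Qed.

Lemma posdef0 (Q : 'M[algC]_0) : posdef Q.
Proof.
rewrite /posdef; split; first by apply/mxOverP => -[].
- by rewrite !flatmx0.
by move=> v _; rewrite flatmx0 eqxx.
Qed.

Lemma nil_stable (N : 'M[algC]_2) : N *m N = 0 -> spec_rad_lt1 N.
Proof.
move=> NN a /eigenvalueP [v Hv vn].
have : (a ^+ 2) *: v = 0.
  by rewrite expr2 -scalerA -Hv scalemxAl -Hv -mulmxA NN mulmx0.
move/eqP; rewrite scaler_eq0 (negbTE vn) orbF expf_eq0 /= => /eqP ->.
by rewrite normr0 ltr01.
Qed.

Lemma swap_unstable : ~ spec_rad_lt1 (mx2 0 (-1) (-1) 0).
Proof.
move=> H; have := H (-1).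
have E : eigenvalue (mx2 0 (-1) (-1) 0) (-1).
  apply/eigenvalueP; exists (\row_(j < 2) (1 : algC)).
    apply/matrixP => i j; rewrite (ord1 i).
    case: (ord2_cases j) => ->;
      rewrite !mxE !big_ord_recl !big_ord0 /= !mxE /=; ring.
  apply/eqP => /matrixP /(_ 0 0); rewrite !mxE; exact/eqP/oner_neq0.
by move/(_ E); rewrite normrN1 ltxx.
Qed.

Lemma half_ok : (1/2 : algC) \is Num.real /\ 0 <= (1/2 : algC) <= 1.
Proof.
split; first by rewrite realE; apply/orP; left; rewrite divr_ge0 ?ler01 ?ler0n.
apply/andP; split; first by rewrite divr_ge0 ?ler01 ?ler0n.
by rewrite ler_pdivrMr ?ltr0n // mul1r ler1n.
Qed.

Theorem lemma2 :
  (exists (d m1 m2 : nat) (A : 'M[algC]_d) (B : 'M[algC]_(d, m1))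
     (C : 'M[algC]_(d, m2)) (Q : 'M[algC]_d) (Ru : 'M[algC]_m1)
     (Rv : 'M[algC]_m2) (L : 'M[algC]_(m2, d)),
     lq_data A B C Q Ru Rv /\ OmegaL Q Rv L /\
     ~ real_convex (fun K : 'M[algC]_(m1, d) => K \is a realmx /\ stabilizing A B C K L))
  /\
  (exists (d m1 m2 : nat) (A : 'M[algC]_d) (B : 'M[algC]_(d, m1))
     (C : 'M[algC]_(d, m2)) (Q : 'M[algC]_d) (Ru : 'M[algC]_m1)
     (Rv : 'M[algC]_m2) (K : 'M[algC]_(m1, d)),
     lq_data A B C Q Ru Rv /\ K \is a realmx /\
     ~ real_convex (fun L : 'M[algC]_(m2, d) => OmegaL Q Rv L /\ stabilizing A B C K L)).
Proof.
have r0 : (0 : algC) \is Num.real by rewrite real0.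
have r2 : (2 : algC) \is Num.real by rewrite realn.
have rA : (0 : 'M[algC]_2) \is a realmx by apply/mxOverP => i j; rewrite mxE.
have pI : posdef (1%:M : 'M[algC]_2) by rewrite mx2_one; apply: posdef_diag; exact: ltr01.
have rI : (1%:M : 'M[algC]_2) \is a realmx by case: pI.
have Nil1 : mx2 0 2 0 0 *m mx2 0 2 0 0 = 0.
  by rewrite mx2_mul !(mul0r, mulr0, addr0); apply/matrixP => i j; rewrite !mxE; by do 2 case: ifP.
have Nil2 : mx2 0 0 2 0 *m mx2 0 0 2 0 = 0.
  by rewrite mx2_mul !(mul0r, mulr0, addr0); apply/matrixP => i j; rewrite !mxE; by do 2 case: ifP.
have Mid : (1 - 1/2) *: mx2 0 2 0 0 + (1/2) *: mx2 0 0 2 0 = mx2 0 1 1 0 :> 'M[algC]_2.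
  rewrite !mx2_scale mx2_add; congr mx2; by field.
have [hr hb] := half_ok.
split.
- exists 2%N; exists 2%N; exists 0%N; exists 0; exists 1%:M; exists 0; exists 1%:M; exists 1%:M; exists 0; exists 0; split.
    rewrite /lq_data; split => //; first by apply/mxOverP => ? [].
    split => //; exact: posdef0.
  split.
    rewrite /OmegaL; split; first by apply/mxOverP => -[].
    by rewrite mulmx0 subr0.
  move=> Hc.
  have S1 : (mx2 0 2 0 0 \is a realmx) /\ stabilizing 0 1%:M (0 : 'M[algC]_(2,0)) (mx2 0 2 0 0) 0.
    split; first exact: mx2_real.
    rewrite /stabilizing mul1mx mul0mx subr0 sub0r; apply: nil_stable.
    by rewrite mulNmx mulmxN opprK.
  have S2 : (mx2 0 0 2 0 \is a realmx) /\ stabilizing 0 1%:M (0 : 'M[algC]_(2,0)) (mx2 0 0 2 0) 0.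
    split; first exact: mx2_real.
    rewrite /stabilizing mul1mx mul0mx subr0 sub0r; apply: nil_stable.
    by rewrite mulNmx mulmxN opprK.
  have [_] := Hc _ _ S1 S2 _ hr hb.
  rewrite Mid /stabilizing mul1mx mul0mx subr0 sub0r mx2_opp oppr0.
  exact: swap_unstable.
- exists 2%N; exists 0%N; exists 2%N; exists 0; exists 0; exists 1%:M; exists (mx2 5 0 0 5); exists 1%:M; exists 1%:M; exists 0; split.
    rewrite /lq_data; split => //; first by apply/mxOverP => ? [].
    split => //; [ apply: posdef_diag; by rewrite ltr0n | exact: posdef0].
  split; first by apply/mxOverP => -[].
  move=> Hc.
  have S1 : OmegaL (mx2 5 0 0 5) 1%:M (mx2 0 2 0 0) /\ stabilizing 0 (0 : 'M[algC]_(2,0)) 1%:M 0 (mx2 0 2 0 0).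
    split.
      split; first exact: mx2_real.
      rewrite mulmx1 mx2_tr mx2_mul mx2_opp mx2_add.
      have -> : mx2 (5 + - (0 * 0 + 0 * 0)) (0 + - (0 * 2 + 0 * 0))
          (0 + - (2 * 0 + 0 * 0)) (5 + - (2 * 2 + 0 * 0)) = mx2 5 0 0 1.
        congr mx2; ring.
      by apply: posdef_diag; rewrite ?ltr0n ?ltr01.
    rewrite /stabilizing mul1mx mul0mx subr0 sub0r; apply: nil_stable.
    by rewrite mulNmx mulmxN opprK.
  have S2 : OmegaL (mx2 5 0 0 5) 1%:M (mx2 0 0 2 0) /\ stabilizing 0 (0 : 'M[algC]_(2,0)) 1%:M 0 (mx2 0 0 2 0).
    split.
      split; first exact: mx2_real.
      rewrite mulmx1 mx2_tr mx2_mul mx2_opp mx2_add.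
      have -> : mx2 (5 + - (0 * 0 + 2 * 2)) (0 + - (0 * 0 + 2 * 0))
          (0 + - (0 * 0 + 0 * 2)) (5 + - (0 * 0 + 0 * 0)) = mx2 1 0 0 5.
        congr mx2; ring.
      by apply: posdef_diag; rewrite ?ltr0n ?ltr01.
    rewrite /stabilizing mul1mx mul0mx subr0 sub0r; apply: nil_stable.
    by rewrite mulNmx mulmxN opprK.
  have [_] := Hc _ _ S1 S2 _ hr hb.
  rewrite Mid /stabilizing mul1mx mul0mx subr0 sub0r mx2_opp oppr0.
  exact: swap_unstable.
Qed.
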